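(* Let $f:X\to\mathcal G$ be a function and $x_0\in\operatorname{dom} f$. The following are equivalent: (a) $f(x_0)=\inf f[X]$; (b) $\varphi_{f,z^*}(x_0)\le\varphi_{f,z^*}(x)$ for all $x\in X$, $z^*\in C^-\setminus\{0\}$; (c) $\varphi_{f,z^*}(x_0)\ominus\varphi_{f,z^*}(x)\le0$ for all $x\in X$, $z^*\in C^-\setminus\{0\}$; (d) $0\in f(x_0)\ominus f(x)$ for all $x\in X$; (e) for all $x\in X$, $z^*\in C^-\setminus\{0\}$: $\varphi_{f,z^*}(x_0)=-\infty$ or $0\le\varphi_{f,z^*}(x)\ominus\varphi_{f,z^*}(x_0)$. Each of these conditions implies (f): $0^+f(x_0)\supseteq f(x)\ominus f(x_0)$ for all $x\in X$.
   Context: $X$ real linear space, $Z$ real locally convex Hausdorff space with dual $Z^*$, $C\subseteq Z$ closed convex cone, $0\in C$, $C^-=\{z^*:z^*(c)\le0\ \forall c\in C\}$, $C^-\setminus\{0\}\ne\emptyset$. $\mathcal G=\{A\subseteq Z:A=\operatorname{cl}\operatorname{co}(A+C)\}$; $A\ominus B=\{z\in Z:B+\{z\}\subseteq A\}$; $0^+A=\{z:A+\{z\}\subseteq A\}$ for $A\ne\emptyset$, $0^+\emptyset=\emptyset$. $\operatorname{dom}f=\{x:f(x)\ne\emptyset\}$, $\inf f[X]=\operatorname{cl}\operatorname{co}\bigcup_{x\in X}f(x)$. On $\overline{\mathbb R}$: inf-addition $\dot+$ ($(-\infty)\dot+(+\infty)=+\infty$), $r\ominus s=\inf\{t\in\mathbb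 R:r\le s\dot+t\}$ ($\inf\emptyset=+\infty$). $\varphi_{f,z^*}(x)=\inf\{-z^*(z):z\in f(x)\}$ ($+\infty$ if $f(x)=\emptyset$). *)

(* Defs.v *)
From HB Require Import structures.
From mathcomp Require Import all_boot all_order all_algebra.
From mathcomp Require Import all_classical all_reals.
From mathcomp Require Import topology tvs ereal.

Set Implicit Arguments.
Unset Strict Implicit.
Unset Printing Implicit Defensive.

Import Order.TTheory GRing.Theory Num.Theory.
Import numFieldTopology.Exports.
Local Open Scope classical_set_scope.
Local Open Scope ring_scope.

Section SetValued.
Variables (R : realType) (Z : tvsType R).

Definition convex (A : set Z) : Prop :=
  forall x y (t : R), A x -> A y -> 0 <= t -> t <= 1 -> A (t *: x + (1 - t) *: y).

Definition convex_cone (C : set Z) : Prop :=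
  C 0 /\ convex C /\ (forall (t : R) c, 0 <= t -> C c -> C (t *: c)).

Definition co (A : set Z) : set Z :=
  \bigcap_(B in [set B : set Z | A `<=` B /\ convex B]) B.

Definition msum (A B : set Z) : set Z := [set a + b | a in A & b in B].

Definition is_dual (zs : Z -> R) : Prop :=
  (forall (a : R) (u v : Z), zs (a *: u + v) = a * zs u + zs v) /\ continuous zs.

Definition neg_polar (C : set Z) : set (Z -> R) :=
  [set zs | is_dual zs /\ forall c, C c -> zs c <= 0].

Definition neg_polar0 (C : set Z) : set (Z -> R) :=
  [set zs | neg_polar C zs /\ zs <> (fun _ => 0)].

Definition GG (C : set Z) : set (set Z) :=
  [set A | A = closure (co (msum A C))].

Definition mdiff (A B : set Z) : set Z :=
  [set z | forall b, B b -> A (b + z)].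

(* recession cone; empty for the empty set *)
Definition recc (A : set Z) : set Z :=
  [set z | A !=set0 /\ forall a, A a -> A (a + z)].

Definition dom (X : Type) (f : X -> set Z) : set X := [set x | f x <> set0].

Definition inf_img (X : Type) (f : X -> set Z) : set Z :=
  closure (co (\bigcup_(x in [set: X]) f x)).

(* scalarization phi_{f,z*}(x) = inf { - z*(z) | z in f x }, +oo if empty *)
Definition phi (X : Type) (f : X -> set Z) (zs : Z -> R) (x : X) : \bar R :=
  ereal_inf [set ((- zs z)%R)%:E | z in f x].

End SetValued.

(* inf-difference on extended reals: r -. s = inf {t in R | r <= s +' t},
   where +' is the inf-addition ((-oo) +' (+oo) = +oo), inf set0 = +oo *)
Definition ediff (R : realType) (r s : \bar R) : \bar R :=
  ereal_inf [set t%:E | t in [set t : R | (r <= dual_adde s t%:E)%E]].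

(* Main.v *)
Require Import Defs.
From HB Require Import structures.
From mathcomp Require Import all_boot all_order all_algebra.
From mathcomp Require Import all_classical all_reals.
From mathcomp Require Import topology tvs ereal normedtype.
From mathcomp Require Import ring lra.

Import Order.TTheory GRing.Theory Num.Theory.
Import numFieldTopology.Exports numFieldNormedType.Exports.

Local Open Scope classical_set_scope.
Local Open Scope ring_scope.

Module Aux.
Set Implicit Arguments.
Unset Strict Implicit.
Unset Printing Implicit Defensive.

Section HBext.
Variables (R : realType) (E : lmodType R) (W : set E) (d0 : E).
Hypothesis Wc : forall x y (t : R), W x -> W y -> 0 <= t -> t <= 1 -> W (t *: x + (1 - t) *: y).
Hypothesis W0 : W 0.
Hypothesis Wabs : forall y, exists2 s : R, 0 < s & W (s *: y).
Hypothesis Wd0 : ~ W d0.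

Definition Pb (G : set (E * R)) :=
  [/\ (forall x a b, G (x,a) -> G (x,b) -> a = b),
      (forall x a y b t, G (x,a) -> G (y,b) -> G (t *: x + y, t * a + b)),
      G (d0, 1) & (forall x a, G (x,a) -> W x -> a <= 1)].

Lemma Pb0 G : Pb G -> G (0, 0).
Proof.
case=> _ lin G1 _; have := lin _ _ _ _ (-1) G1 G1.
by rewrite scaleN1r addNr mulN1r addNr.
Qed.

Lemma d0_neq0 : d0 != 0.
Proof. by apply/eqP => h; apply: Wd0; rewrite h. Qed.

Definition G0 : set (E * R) := [set p | exists t : R, p = (t *: d0, t)].

Lemma Pb_G0 : Pb G0.
Proof.
split.
- move=> x a b [t [-> ->]] [s [h ->]].
  apply/eqP; rewrite -subr_eq0; apply/eqP.
  have : (t - s) *: d0 = 0 by rewrite scalerBl h subrr.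
  by move/eqP; rewrite scaler_eq0 (negbTE d0_neq0) orbF => /eqP.
- move=> x a y b t [u [-> ->]] [v [-> ->]]; exists (t * u + v).
  by rewrite scalerDl scalerA.
- by exists 1; rewrite scale1r.
- move=> x a [t [-> ->]] Wx; rewrite leNgt; apply/negP => t1.
  apply: Wd0.
  have t0 : 0 < t by apply: lt_trans t1.
  have := @Wc _ _ (t^-1) Wx W0 (ltW (eqbRL (invr_gt0 _) t0)) _.
  rewrite scaler0 addr0 scalerA mulVf ?gt_eqF // scale1r; apply.
  by rewrite invf_le1 // ltW.
Qed.


Section ext.
Variables (A : set (E * R)) (y : E).
Hypothesis PA : Pb A.
Hypothesis nA : ~ (exists a, A (y, a)).

Let L := [set v : R | exists m a s, [/\ A (m,a), 0 < s, W (m - s *: y) & v = (a - 1) / s]].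
Let U := [set v : R | exists m a s, [/\ A (m,a), 0 < s, W (m + s *: y) & v = (1 - a) / s]].

Let LU l u : L l -> U u -> l <= u.
Proof.
case: PA => fA lin _ bA.
move=> [m2 [a2 [s2 [A2 s2p W2 ->]]]] [m1 [a1 [s1 [A1 s1p W1 ->]]]].
have sp : 0 < s1 + s2 by rewrite addr_gt0.
pose t := s1 / (s1 + s2).
have t0 : 0 <= t by rewrite divr_ge0 // ltW.
have t1 : t <= 1 by rewrite ler_pdivrMr // mul1r lerDl ltW.
have ts : (1 - t) * s1 = t * s2 by rewrite /t; field; rewrite gt_eqF.
have := @Wc _ _ t W2 W1 t0 t1.
have -> : t *: (m2 - s2 *: y) + (1 - t) *: (m1 + s1 *: y) = t *: m2 + ((1 - t) *: m1 + 0).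
  rewrite addr0 scalerBr scalerDr !scalerA ts [_ *: m1 + _]addrC addrA subrK //.
have Am1 : A ((1 - t) *: m1 + 0, (1 - t) * a1 + 0) by apply: lin => //; exact: Pb0.
move/(bA _ _ (lin _ _ _ _ t A2 Am1)).
have -> : t * a2 + ((1 - t) * a1 + 0) = (s1 * a2 + s2 * a1) / (s1 + s2).
  by rewrite /t; field; rewrite gt_eqF.
rewrite ler_pdivrMr // mul1r => h.
rewrite ler_pdivrMr // mulrAC ler_pdivlMr //; nra.
Qed.

Let Lne : L !=set0.
Proof.
have [s s0 Ws] := Wabs (- y).
exists ((0 - 1) / s), 0, 0, s; split => //; first exact: Pb0.
by rewrite sub0r -scalerN.
Qed.

Let Une : U !=set0.
Proof.
have [s s0 Ws] := Wabs y.
exists ((1 - 0) / s), 0, 0, s; split => //; first exact: Pb0.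
by rewrite add0r.
Qed.

Let c := sup L.

Let Lc l : L l -> l <= c.
Proof.
apply: sup_upper_bound; split => //.
case: Une => u Uu; exists u => l' Ll'; exact: LU.
Qed.

Let cU u : U u -> c <= u.
Proof. by move=> Uu; apply: ge_sup => // l Ll; exact: LU. Qed.

Let B := [set p : E * R | exists m a s, A (m,a) /\ p = (m + s *: y, a + s * c)].

Let PB : Pb B.
Proof.
case: PA => fA lin A1 bA; split.
- move=> x a b [m1 [a1 [s1 [A1' [-> ->]]]]] [m2 [a2 [s2 [A2' [h ->]]]]].
  have [e|ne] := eqVneq s1 s2.
    move: h; rewrite e => /addIr h; move: A1'; rewrite h => A1'.
    by rewrite (fA _ _ _ A1' A2').
  exfalso; apply: nA.
  have h' : (s1 - s2) *: y = m2 - m1.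
    by rewrite scalerBl; apply: (addrI m1); rewrite addrA h addrK [m1 + _]addrC subrK.
  have Ad := lin _ _ _ _ (-1) A1' A2'.
  have Ae := lin _ _ _ _ (s1 - s2)^-1 Ad (Pb0 PA).
  exists ((s1 - s2)^-1 * (-1 * a1 + a2) + 0).
  have -> : y = (s1 - s2)^-1 *: (-1 *: m1 + m2) + 0.
    by rewrite addr0 scaleN1r [- m1 + _]addrC -h' scalerA mulVf ?scale1r // subr_eq0.
  exact: Ae.
- move=> x a x' b t [m1 [a1 [s1 [A1' [-> ->]]]]] [m2 [a2 [s2 [A2' [-> ->]]]]].
  exists (t *: m1 + m2), (t * a1 + a2), (t * s1 + s2); split; first exact: lin.
  congr pair; last by ring.
  rewrite scalerDr scalerDl !scalerA.
  by rewrite -!addrA; congr (_ + _); rewrite addrCA.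
- by exists d0, 1, 0; split; [done | rewrite scale0r mul0r !addr0].
- move=> x a [m [a' [s [Am [-> ->]]]]].
  have [s0|s0|->] := ltgtP s 0 => Wx.
  + have Ll : L ((a' - 1) / (- s)).
      exists m, a', (- s); split => //; first by rewrite oppr_gt0.
      by rewrite scaleNr opprK.
    have := Lc Ll; rewrite ler_pdivrMr ?oppr_gt0 //; nra.
  + have Uu : U ((1 - a') / s) by exists m, a', s.
    have := cU Uu; rewrite ler_pdivlMr //; nra.
  + by rewrite mul0r addr0; apply: bA Am _; move: Wx; rewrite scale0r addr0.
Qed.

Let AB : A `<` B.
Proof.
split.
- by move=> [x a] Ax; exists x, a, 0; split => //; rewrite scale0r mul0r !addr0.
- move=> BA; apply: nA; exists c; apply: BA.
  by exists 0, 0, 1; split; [exact: Pb0|rewrite scale1r add0r mul1r add0r].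
Qed.

Lemma Pb_ext : exists B, Pb B /\ A `<` B.
Proof. by exists B; split; [exact: PB|exact: AB]. Qed.

End ext.

Lemma HB_exists : exists l : E -> R,
  [/\ (forall a u v, l (a *: u + v) = a * l u + l v), l d0 = 1
    & forall w, W w -> l w <= 1].
Proof.
pose P (G : set (E * R)) := G = set0 \/ Pb G.
have chP : forall F : set (set (E * R)), F `<=` P -> total_on F subset ->
    P (\bigcup_(X in F) X).
  move=> F FP tot.
  have [[G [FG [[x a] Gxa]]]|nG] := pselect (exists G, F G /\ G !=set0); last first.
    left; apply/seteqP; split => // p [G FG Gp]; exfalso; apply: nG.
    by exists G; split => //; exists p.
  right.
  have PbG : Pb G by case: (FP _ FG) => // G0e; move: Gxa; rewrite G0e.
  have com : forall G1 G2 p1 p2, F G1 -> F G2 -> G1 p1 -> G2 p2 ->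
      exists2 G3, F G3 /\ Pb G3 & G3 p1 /\ G3 p2.
    move=> G1 G2 p1 p2 F1 F2 G1p G2p.
    have [s12|s21] := tot _ _ F1 F2.
    - exists G2; last by split => //; apply: s12.
      by split => //; case: (FP _ F2) => // e; move: G2p; rewrite e.
    - exists G1; last by split => //; apply: s21.
      by split => //; case: (FP _ F1) => // e; move: G1p; rewrite e.
  split.
  - move=> y b b' [G1 F1 G1p] [G2 F2 G2p].
    have [G3 [_ [fG3 _ _ _]] [h1 h2]] := com _ _ _ _ F1 F2 G1p G2p.
    exact: fG3 h1 h2.
  - move=> y b y' b' t [G1 F1 G1p] [G2 F2 G2p].
    have [G3 [F3 [_ lG3 _ _]] [h1 h2]] := com _ _ _ _ F1 F2 G1p G2p.
    by exists G3 => //; exact: lG3.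
  - by case: PbG => _ _ h _; exists G.
  - move=> y b [G1 F1 G1p] Wy.
    have [G3 [_ [_ _ _ bG3]] [h1 _]] := com _ _ _ _ F1 F1 G1p G1p.
    exact: bG3 h1 Wy.
have [M [PM Mmax]] := Zorn_bigcup chP.
have PbM : Pb M.
  case: PM => // M0; exfalso; apply: (Mmax G0); last by right; exact: Pb_G0.
  rewrite M0; split; first by [].
  move=> h; have := h (0 *: d0, 0); rewrite /G0 /=; apply; by exists 0.
have tot : forall u, exists a, M (u, a).
  move=> u; apply: contrapT => nM.
  have [B [PbB MB]] := Pb_ext PbM nM.
  by apply: (Mmax B MB); right.
have [l Hl] := choice tot.
case: PbM => fM lM M1 bM.
exists l; split.
- move=> a u v; apply: (fM (a *: u + v)); first exact: Hl.
  by apply: lM; apply: Hl.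
- by apply: (fM d0); [exact: Hl|].
- by move=> w Ww; apply: (bM w); [exact: Hl|].
Qed.

End HBext.


Section tvs_aux.
Variables (R : realType) (Z : tvsType R).

Lemma cont_t_scale (y : Z) (t0 : R) : {for t0, continuous (fun t : R^o => t *: y)}.
Proof.
apply: (@continuous_comp _ _ _ (fun t : R^o => (t, y)) (fun p : R^o * Z => p.1 *: p.2)).
  exact: (@cvg_pair _ _ _ (nbhs (t0:R^o)) (nbhs (t0:R^o)) (nbhs y) _ _ _ (fun t => t) (fun _ => y) cvg_id (cvg_cst y)).
exact: (@scale_continuous R Z (t0, y)).
Qed.

Lemma cont_aff (k : R) (p : Z) : continuous (fun u : Z => k *: u + p).
Proof.
move=> x.
apply: (@continuous_comp _ _ _ (fun u : Z => k *: u) (fun u : Z => u + p)).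
  apply: (@continuous_comp _ _ _ (fun u : Z => ((k : R^o), u)) (fun q : R^o * Z => q.1 *: q.2)).
    exact: (@cvg_pair _ _ _ (nbhs x) (nbhs (k:R^o)) (nbhs x) _ _ _ (fun _ => (k:R^o)) (fun u => u) (cvg_cst (k:R^o)) cvg_id).
  exact: (@scale_continuous R Z (k, x)).
apply: (@continuous_comp _ _ _ (fun u : Z => (u, p)) (fun q : Z * Z => q.1 + q.2)).
  exact: (@cvg_pair _ _ _ (nbhs (k *: x)) (nbhs (k *: x)) (nbhs p) _ _ _ (fun u => u) (fun _ => p) cvg_id (cvg_cst p)).
exact: (@add_continuous Z (k *: x, p)).
Qed.

Lemma absorb (S : set Z) : nbhs 0 S -> forall y, exists2 s : R, 0 < s & S (s *: y).
Proof.
move=> S0 y.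
have : nbhs (0 : R^o) [set t : R^o | S (t *: y)].
  have h := @cont_t_scale y 0 S; rewrite /= scale0r in h; exact: h S0.
move/nbhs_ballP => [e /= e0 he].
exists (e / 2); first by rewrite divr_gt0.
apply: he; rewrite /ball /= sub0r normrN ger0_norm ?divr_ge0 ?ltW //.
by rewrite ltr_pdivrMr // ltr_pMr // ltr1n.
Qed.

End tvs_aux.


Section sep.
Variables (R : realType) (Z : tvsType R).

Lemma cvx_conv (U : set Z) : convex.convex_set U ->
  forall x y (t : R), U x -> U y -> 0 <= t -> t <= 1 -> U (t *: x + (1 - t) *: y).
Proof.
move=> cU x y t Ux Uy t0 t1.
have := cU x y (Itv01 t0 t1) (mem_set Ux) (mem_set Uy).
by move/set_mem.
Qed.

Lemma lin_facts (l : Z -> R) : (forall a u v, l (a *: u + v) = a * l u + l v) ->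
  [/\ l 0 = 0, (forall k u, l (k *: u) = k * l u), (forall u v, l (u + v) = l u + l v)
    & (forall u, l (- u) = - l u)].
Proof.
move=> ll.
have l0 : l 0 = 0.
  by have := ll 1 0 0; rewrite scale1r addr0 mul1r => h; lra.
have lZ : forall k u, l (k *: u) = k * l u.
  by move=> k u; have := ll k u 0; rewrite !addr0 l0 addr0.
split => //.
- by move=> u v; have := ll 1 u v; rewrite scale1r mul1r.
- by move=> u; rewrite -scaleN1r lZ mulN1r.
Qed.

Lemma nbhsS (x : Z) (P Q : set Z) : P `<=` Q -> nbhs x P -> nbhs x Q.
Proof. by move=> PQ; apply: (@filterS _ _ (nbhs_filter x)). Qed.

Lemma separate (K : set Z) (a0 z : Z) : closed K ->
  (forall x y (t : R), K x -> K y -> 0 <= t -> t <= 1 -> K (t *: x + (1 - t) *: y)) ->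
  K a0 -> ~ K z ->
  exists l : Z -> R, [/\ (forall a u v, l (a *: u + v) = a * l u + l v), continuous l
    & exists2 e, 0 < e & forall a, K a -> l a <= l z - e].
Proof.
move=> Kcl Kcv Ka0 nKz.
have [B Bc [Bo Bb]] := @locally_convex R Z.
have nK : nbhs z (~` K) := open_nbhs_nbhs (conj (closed_openC Kcl) nKz).
have [U [BU Uz] UK] := Bb z (~` K) nK.
have Ucv := cvx_conv (Bc U (mem_set BU)).
have nU : nbhs z U by apply: (@open_nbhs_nbhs _ z U); split => //; exact: Bo.
have [d0 d0E] : {d0 : Z | d0 = z - a0} by exists (z - a0).
have V0 : nbhs (0 : Z) [set w | U (z - w)].
  have h := @cont_aff R Z (-1) z 0 U.
  rewrite /= scaler0 add0r in h.
  by apply: (nbhsS _ (h nU)) => w /=; rewrite scaleN1r addrC.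
pose W := [set w | exists a v, [/\ K a, U v & w + v = a + d0]].
have Wc : forall x y (t : R), W x -> W y -> 0 <= t -> t <= 1 -> W (t *: x + (1 - t) *: y).
  move=> x y t [a1 [v1 [K1 U1 e1]]] [a2 [v2 [K2 U2 e2]]] t0 t1.
  exists (t *: a1 + (1 - t) *: a2), (t *: v1 + (1 - t) *: v2); split.
  - exact: Kcv.
  - exact: Ucv.
  - rewrite addrACA -!scalerDr e1 e2 !scalerDr addrACA -scalerDl.
    by rewrite [t + _]addrC subrK scale1r.
have W0 : W 0 by exists a0, z; split => //; rewrite add0r d0E addrC subrK.
have Wd0 : ~ W d0.
  move=> [a [v [Ka Uv]]]; rewrite addrC => /addIr e.
  by apply: (UK v Uv); rewrite e.
have nW : nbhs (0 : Z) W.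
  apply: (nbhsS _ V0) => w Uw; exists a0, (z - w); split => //.
  by rewrite d0E [w + _]addrC subrK [a0 + _]addrC subrK.
have [l [ll l1 lW]] := HB_exists Wc W0 (absorb nW) Wd0.
have [l0 lZ lD lN] := lin_facts ll.
have lB : forall u v, l (u - v) = l u - l v by move=> u v; rewrite lD lN.
exists l; split => //.
- move=> x; rewrite /continuous_at; apply/(@cvgrPdist_lt _ _ _ (nbhs x) (nbhs_filter x)).
  move=> eps eps0.
  pose k := 2 / eps.
  have k0 : 0 < k by rewrite divr_gt0.
  have nN : nbhs (0 : Z) (W `&` [set w | W (- w)]).
    apply: (@filterI _ _ (nbhs_filter (0:Z))) => //.
    have h := @cont_aff R Z (-1) 0 0 W.
    rewrite /= scaler0 addr0 in h.
    by apply: (nbhsS _ (h nW)) => w /=; rewrite scaleN1r addr0.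
  have h := @cont_aff R Z k (- (k *: x)) x (W `&` [set w | W (- w)]).
  rewrite /= subrr in h.
  apply: (nbhsS _ (h nN)) => u /= [Wu Wnu].
  have := lW _ Wu; have := lW _ Wnu.
  rewrite lN !lD lN !lZ => h1 h2.
  have e1 : k * (l u - l x) <= 1 by rewrite mulrBr.
  have e2 : - (k * (l u - l x)) <= 1 by rewrite mulrBr opprB; lra.
  have ke : k * eps = 2 by rewrite /k divfK ?gt_eqF.
  rewrite -normrN opprB ltr_norml; apply/andP; split; nra.
- have [s s0 Us] := absorb V0 d0.
  exists s => // a Ka.
  have Ww : W (a - (z - s *: d0) + d0).
    by exists a, (z - s *: d0); split => //; rewrite addrAC subrK.
  have := lW _ Ww; rewrite lD !lB lZ l1 mulr1; lra.
Qed.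
End sep.

Local Open Scope ereal_scope.

Section ed.
Variable R : realType.

Lemma dadd_fin (s t : R) : dual_adde s%:E t%:E = (s + t)%:E.
Proof. by rewrite /dual_adde /=. Qed.
Lemma dadd_Ny (t : R) : dual_adde -oo t%:E = -oo.
Proof. by []. Qed.

Lemma ediff_le0 (r s : \bar R) : ediff r s <= 0 <-> r <= s.
Proof.
split; last first.
  move=> rs; apply: ge_ereal_inf; exists 0%:E => //; exists 0%R => //=.
  by case: s rs => //= s'; rewrite dadd_fin addr0.
move=> h; rewrite leNgt; apply/negP => sr.
suff [M M0 lbM] : exists2 M : R, (0 < M)%R & lbound [set t%:E | t in [set t : R | (r <= dual_adde s t%:E)%E]] M%:E.
  have := le_trans (le_ereal_inf_tmp lbM) h; rewrite lee_fin; lra.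
clear h; case: s sr => [s'||] sr.
- case: r sr => [r'||] sr.
  + exists (r' - s')%R; first by rewrite subr_gt0 -lte_fin.
    move=> _ [t /= ht <-]; rewrite lee_fin; move: ht; rewrite dadd_fin lee_fin; lra.
  + exists 1%R => // _ [t /= ht <-]; exfalso.
    by move: ht; rewrite dadd_fin leNgt ltey.
  + by move: sr; rewrite ltNge leNye.
- by move: sr; rewrite ltNge leey.
- exists 1%R => // _ [t /= ht <-]; exfalso.
  by move: ht; rewrite dadd_Ny leeNy_eq => /eqP rE; move: sr; rewrite rE ltxx.
Qed.

Lemma ediff_ge0 (r : \bar R) (s : R) : 0 <= ediff r s%:E <-> s%:E <= r.
Proof.
split; last first.
  move=> sr; apply: le_ereal_inf_tmp => _ [t /= ht <-].
  have := le_trans sr ht; rewrite !lee_fin; lra.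
move=> h; rewrite leNgt; apply/negP => rs.
suff [t t0 ht] : exists2 t : R, (t < 0)%R & (r <= (s + t)%:E).
  have : ediff r s%:E <= t%:E.
    by apply: ge_ereal_inf; exists t%:E => //; exists t.
  move=> /(le_trans h); rewrite lee_fin; lra.
clear h; case: r rs => [r'||] rs.
- exists (r' - s)%R; last by rewrite subrKC.
  by rewrite subr_lt0 -lte_fin.
- by move: rs; rewrite ltNge leey.
- by exists (-1)%R; [exact: ltrN10 | exact: leNye].
Qed.
End ed.

End Aux.
Import Aux.


Section cl.
Variables (R : realType) (Z : tvsType R).

Lemma closure_cvx (K : set Z) : convex K -> convex (closure K).
Proof.
move=> cK x y t cx cy t0 t1 B; rewrite nbhsE => -[O [Oo Op] OB].
have h1 := @cont_aff R Z t ((1 - t) *: y) x O (open_nbhs_nbhs (conj Oo Op)).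
have [u [Ku Ou]] := cx _ h1.
have Ou' : O ((1 - t) *: y + t *: u) by rewrite addrC.
have h2 := @cont_aff R Z (1 - t) (t *: u) y O (open_nbhs_nbhs (conj Oo Ou')).
have [v [Kv Ov]] := cy _ h2.
exists (t *: u + (1 - t) *: v); split; first exact: cK.
by apply: OB; move: Ov => /=; rewrite addrC.
Qed.

Lemma co_sub (A : set Z) : A `<=` co A.
Proof. by move=> a Aa B [AB _]; exact: AB. Qed.

Lemma co_min (A B : set Z) : A `<=` B -> convex B -> co A `<=` B.
Proof. by move=> AB cB a h; apply: h; split. Qed.

Lemma co_cvx (A : set Z) : convex (co A).
Proof.
move=> x y t hx hy t0 t1 B [AB cB]; apply: (cB) => //; [apply: hx | apply: hy]; split => //.
Qed.
End cl.

Section main.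
Variables (R : realType) (X : lmodType R) (Z : tvsType R) (C : set Z) (f : X -> set Z) (x0 : X).
Hypothesis cC : convex_cone C.
Hypothesis hG : forall x, GG C (f x).
Hypothesis dx0 : dom f x0.

Lemma G_closed x : closed (f x).
Proof. by move: (hG x) => ->; exact: closed_closure. Qed.

Lemma G_cvx x : convex (f x).
Proof. by move: (hG x) => ->; apply: closure_cvx; exact: co_cvx. Qed.

Lemma G_addC x a c : f x a -> C c -> f x (a + c).
Proof.
move=> fa Cc; rewrite (hG x); apply: subset_closure; apply: co_sub.
by exists a => //; exists c.
Qed.

Lemma sub_inf x : f x `<=` inf_img f.
Proof. by move=> z fz; apply: subset_closure; apply: co_sub; exists x. Qed.

Lemma fx0_ne : f x0 !=set0.
Proof. by apply/set0P; apply/eqP; exact: dx0. Qed.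

Lemma ad : f x0 = inf_img f <-> (forall x, f x `<=` f x0).
Proof.
split.
  by move=> e x; rewrite e; exact: sub_inf.
move=> h; apply/seteqP; split; first exact: sub_inf.
have e := (closure_id (f x0)).1 (G_closed x0).
rewrite [Y in _ `<=` Y]e; apply: closureS; apply: co_min; last exact: G_cvx.
by move=> z [x _ fz]; exact: (h x z fz).
Qed.

Lemma md_sub x : mdiff (f x0) (f x) 0 <-> f x `<=` f x0.
Proof.
split => h b fb; first by have := h b fb; rewrite addr0.
by rewrite addr0; exact: h.
Qed.

Lemma phi_mono zs x : f x `<=` f x0 -> (phi f zs x0 <= phi f zs x)%E.
Proof. by move=> h; apply: ereal_inf_le_tmp => _ [z fz <-]; exists z => //; exact: h. Qed.

Lemma phi_x0_lt zs : (phi f zs x0 < +oo)%E.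
Proof.
have [a0 fa0] := fx0_ne.
apply: (@le_lt_trans _ _ ((- zs a0)%:E)); last exact: ltey.
by apply: ereal_inf_lbound; exists a0.
Qed.

Lemma b_to_sub : (forall x zs, neg_polar0 C zs -> (phi f zs x0 <= phi f zs x)%E) ->
  forall x, f x `<=` f x0.
Proof.
move=> hb x w fw; apply: contrapT => nw.
have [a0 fa0] := fx0_ne.
have [l [ll lc [e e0 le]]] := separate (G_closed x0) (G_cvx x0) fa0 nw.
have [l0 lZ lD lN] := lin_facts ll.
case: cC => _ [_ cone].
have lC : forall c, C c -> l c <= 0.
  move=> c Cc; rewrite leNgt; apply/negP => lc0.
  pose t := (`|l w - l a0| + 1) / l c.
  have t0 : 0 <= t by rewrite /t divr_ge0 // ?ltW // addr_ge0.
  have := le (a0 + t *: c) (G_addC x0 _ _ fa0 (cone _ _ t0 Cc)).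
  rewrite lD lZ /t divfK ?gt_eqF //.
  have := ler_norm (l w - l a0); lra.
have nz : l <> (fun _ => 0).
  by move=> h; have := le _ fa0; rewrite h /=; lra.
have zs : neg_polar0 C l by split => //; split => //; split.
have := hb x l zs.
have h1 : ((- l w + e)%:E <= phi f l x0)%E.
  apply: le_ereal_inf_tmp => _ [a fa <-]; rewrite lee_fin; have := le a fa; lra.
have h2 : (phi f l x <= (- l w)%:E)%E by apply: ereal_inf_lbound; exists w.
move=> h3; have := le_trans h1 (le_trans h3 h2); rewrite lee_fin; lra.
Qed.


Local Open Scope ereal_scope.
Lemma main_all :
  let a := f x0 = inf_img f in
  let b := forall x zs, neg_polar0 C zs -> (phi f zs x0 <= phi f zs x)%E in
  let c := forall x zs, neg_polar0 C zs -> (ediff (phi f zs x0) (phi f zs x) <= 0)%E in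
  let d := forall x, mdiff (f x0) (f x) (0%R : Z) in
  let e := forall x zs, neg_polar0 C zs ->
             phi f zs x0 = -oo%E \/ (0 <= ediff (phi f zs x) (phi f zs x0))%E in
  let g := forall x, mdiff (f x) (f x0) `<=` recc (f x0) in
  [/\ a <-> b, a <-> c, a <-> d, a <-> e
    & [/\ a -> g, b -> g, c -> g, d -> g & e -> g]].
Proof.
move=> a b c d e g.
have AS : a <-> (forall x, f x `<=` f x0) := ad.
have AB : a <-> b.
  split; first by move=> /AS h x zs _; exact: phi_mono zs x (h x).
  by move=> hb; apply/AS; exact: b_to_sub hb.
have BC : b <-> c.
  by split => h x zs hz; [apply/ediff_le0 | apply/ediff_le0]; exact: h.
have BE : b <-> e.
  split.
  - move=> h x zs hz; have := h x zs hz; have := phi_x0_lt zs.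
    case: (phi f zs x0) => [s||] _ // hs; last by left.
    by right; apply/ediff_ge0.
  - move=> h x zs hz; have := h x zs hz; have := phi_x0_lt zs.
    case: (phi f zs x0) => [s||] _ //; last by move=> _; exact: leNye.
    by case => // /ediff_ge0.
have AD : a <-> d.
  split; first by move=> /AS h x; apply/md_sub; exact: h.
  by move=> h; apply/AS => x; apply/md_sub; exact: h.
have DG : d -> g.
  move=> hd x z hz; split; first exact: fx0_ne.
  by move=> a0 fa0; apply: (md_sub x).1 (hd x) _ (hz _ fa0).
split => //.
- exact: iff_trans AB BC.
- exact: iff_trans AB BE.
- split.
  + by move=> /AD/DG.
  + by move=> /AB.2/AD/DG.
  + by move=> /BC.2/AB.2/AD/DG.
  + exact: DG.
  + by move=> /BE.2/AB.2/AD/DG.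
Qed.
End main.


Local Open Scope ereal_scope.

Theorem mainTheorem18 (R : realType) (X : lmodType R) (Z : tvsType R)
  (C : set Z) (f : X -> set Z) (x0 : X) :
  hausdorff_space Z ->
  closed C -> convex_cone C ->
  neg_polar0 C !=set0 ->
  (forall x, GG C (f x)) ->
  dom f x0 ->
  let a := f x0 = inf_img f in
  let b := forall x zs, neg_polar0 C zs -> (phi f zs x0 <= phi f zs x)%E in
  let c := forall x zs, neg_polar0 C zs -> (ediff (phi f zs x0) (phi f zs x) <= 0)%E in
  let d := forall x, mdiff (f x0) (f x) (0%R : Z) in
  let e := forall x zs, neg_polar0 C zs ->
             phi f zs x0 = -oo%E \/ (0 <= ediff (phi f zs x) (phi f zs x0))%E in
  let g := forall x, mdiff (f x) (f x0) `<=` recc (f x0) in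
  [/\ a <-> b, a <-> c, a <-> d, a <-> e
    & [/\ a -> g, b -> g, c -> g, d -> g & e -> g]].
Proof.
move=> _ _ cC _ hG dx0.
exact: (@main_all R X Z C f x0 cC hG dx0).
Qed.
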